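(* For a $*$-ring $R$ the following are equivalent: (1) $R$ is a generalized Rickart $*$-ring; (2) $R$ is a generalized weakly Rickart $*$-ring with unity.
   Context: A $*$-ring is an associative ring $R$ with an involution $x\mapsto x^*$ (additive, $(xy)^*=y^*x^*$, $x^{**}=x$). A projection is an element $e$ with $e=e^*=e^2$. For $a\in R$, $r(a)=\{b\in R: ab=0\}$. $R$ is a generalized Rickart $*$-ring if for every $x\in R$ there exist a positive integer $n$ and a projection $g$ with $r(x^n)=gR$. A projection $e$ is a generalized right projection of $x$ if there exists $n\in\mathbb N$ with $x^ne=x^n$ and, for all $y\in R$, $x^ny=0$ implies $ey=0$. $R$ is a generalized weakly Rickart $*$-ring if every element of $R$ has a generalized right projection. *)

(* Defs.v *)
(* A *-ring need not have a unit, so we model it as an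
   additive abelian group (zmodType) with an explicit associative,
   biadditive multiplication and an involution. *)
From mathcomp Require Import all_boot all_algebra.
Set Implicit Arguments. Unset Strict Implicit. Unset Printing Implicit Defensive.
Import GRing.Theory.
Local Open Scope ring_scope.

Section StarRing.
Variables (R : zmodType) (mul : R -> R -> R) (star : R -> R).

Definition is_rng : Prop :=
  associative mul /\ left_distributive mul +%R /\ right_distributive mul +%R.

Definition is_star_ring : Prop :=
  is_rng /\
  (forall x y, star (x + y) = star x + star y) /\
  (forall x y, star (mul x y) = mul (star y) (star x)) /\
  (forall x, star (star x) = x).

Definition has_unity : Prop := exists u : R, forall x, mul u x = x /\ mul x u = x.

(* x ^ n for n >= 1 : rpow x 1 = x, rpow x (n+1) = rpow x n * x *)
Definition rpow (x : R) (n : nat) : R := iter n.-1 (fun y => mul y x) x.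

Definition projection (e : R) : Prop := e = star e /\ e = mul e e.

Definition rann (a : R) : R -> Prop := fun b => mul a b = 0.

Definition right_ideal_gen (g : R) : R -> Prop := fun b => exists r, b = mul g r.

Definition generalized_rickart : Prop :=
  forall x : R, exists n : nat, exists g : R,
    (0 < n)%N /\ projection g /\ (forall b, rann (rpow x n) b <-> right_ideal_gen g b).

Definition gen_right_projection (x e : R) : Prop :=
  projection e /\ exists n : nat, (0 < n)%N /\ mul (rpow x n) e = rpow x n /\
    (forall y, mul (rpow x n) y = 0 -> mul e y = 0).

Definition generalized_weakly_rickart : Prop :=
  forall x : R, exists e : R, gen_right_projection x e.

End StarRing.

(* Main.v *)
Require Import Defs.
From mathcomp Require Import all_boot all_algebra.
Import GRing.Theory.
Local Open Scope ring_scope.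

Section Helpers.
Variables (R : zmodType) (mul : R -> R -> R) (star : R -> R).
Hypotheses (mA : associative mul) (mDl : left_distributive mul +%R)
  (mDr : right_distributive mul +%R).
Hypotheses (sD : forall x y, star (x + y) = star x + star y)
  (sM : forall x y, star (mul x y) = mul (star y) (star x))
  (sK : forall x, star (star x) = x).

Lemma mul0r' x : mul 0 x = 0.
Proof. apply: (@addrI _ (mul 0 x)); by rewrite -mDl !addr0. Qed.
Lemma mulr0' x : mul x 0 = 0.
Proof. apply: (@addrI _ (mul x 0)); by rewrite -mDr !addr0. Qed.
Lemma mulNr' x y : mul (- x) y = - mul x y.
Proof. apply: (@addrI _ (mul x y)); by rewrite -mDl !subrr mul0r'. Qed.
Lemma mulrN' x y : mul x (- y) = - mul x y.
Proof. apply: (@addrI _ (mul x y)); by rewrite -mDr !subrr mulr0'. Qed.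
Lemma mulBl x y z : mul (x - y) z = mul x z - mul y z.
Proof. by rewrite mDl mulNr'. Qed.
Lemma mulBr x y z : mul x (y - z) = mul x y - mul x z.
Proof. by rewrite mDr mulrN'. Qed.
Lemma star0 : star 0 = 0.
Proof. apply: (@addrI _ (star 0)); by rewrite -sD !addr0. Qed.
Lemma starN x : star (- x) = - star x.
Proof. apply: (@addrI _ (star x)); by rewrite -sD !subrr star0. Qed.

Variable u : R.
Hypothesis hu : forall x, mul u x = x /\ mul x u = x.

Lemma star1 : star u = u.
Proof.
have := sM (star u) u; rewrite sK (proj2 (hu (star u))) sK.
by move=> h; apply: esym.
Qed.

Lemma proj_compl e : projection mul star e -> projection mul star (u - e).
Proof.
case=> e1 e2; split.
  by rewrite sD starN star1 -e1.
rewrite mulBl !mulBr (proj1 (hu _)) (proj2 (hu _)) (proj1 (hu _)) -e2.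
by rewrite subrr subr0.
Qed.
End Helpers.

Theorem mainTheorem8 (R : zmodType) (mul : R -> R -> R) (star : R -> R) :
  is_star_ring mul star ->
  (generalized_rickart mul star <->
   generalized_weakly_rickart mul star /\ has_unity mul).
Proof.
move=> [[mA [mDl mDr]] [sD [sM sK]]].
have hu_of : generalized_rickart mul star -> has_unity mul.
  move=> GR; have [n [g [n0 [[g1 g2] hg]]]] := GR 0.
  have r0 : forall m, rpow mul 0 m = 0.
    by move=> m; rewrite /rpow; elim: m.-1 => //= k ->; rewrite mulr0'.
  have left : forall b, mul g b = b.
    move=> b; have [r ->] : right_ideal_gen mul g b.
      by apply/hg; rewrite /rann r0 mul0r'.
    by rewrite mA -g2.
  exists g => x; split => //.
  by rewrite -[x]sK -[in RHS](left (star x)) sM -g1 sK.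
split.
- move=> GR; have [u hu] := hu_of GR; split; last by exists u.
  move=> x; have [n [g [n0 [pg hg]]]] := GR x.
  case: (pg) => g1 g2.
  have xg : mul (rpow mul x n) g = 0 by apply/hg; exists g.
  exists (u - g); split; first exact: proj_compl.
  exists n; split => //; split.
    by rewrite mulBr // xg subr0 (proj2 (hu _)).
  move=> y /hg [r ->]; rewrite mulBl // (proj1 (hu _)) mA -g2 subrr //.
- move=> [GW [u hu]] x; have [e [pe [n [n0 [xe he]]]]] := GW x.
  case: (pe) => e1 e2.
  exists n, (u - e); split => //; split; first exact: proj_compl.
  move=> b; split.
    move=> hb; exists b; rewrite mulBl // (proj1 (hu _)) (he _ hb) subr0 //.
  by move=> [r ->]; rewrite /rann mA mulBr // (proj2 (hu _)) xe subrr (@mul0r' _ _ mDl).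
Qed.
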